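(* Let $p$ be a prime, $\mathbb{C}_p$ the field of complex $p$-adic numbers with norm $|\cdot|_p$, $a,b,c\in\mathbb{C}_p$ with $b\neq0$, $c\neq ab$, $f(x)=\frac{x+a}{bx+c}$ for $x\neq -c/b$. Fix a square root $\sqrt{(c-1)^2+4ab}$ and let $x_{1}=\frac{1-c+\sqrt{(c-1)^2+4ab}}{2b}$, $x_2=\frac{1-c-\sqrt{(c-1)^2+4ab}}{2b}$. Put $$\delta_1=\left|\frac{(bx_1+c)^2}{c-ab}\right|_p-1,\qquad \delta_2=\left|\frac{bx_1+c}{b}\right|_p-1.$$ If $x\in\mathbb{C}_p$ satisfies $|x-x_2|_p>\frac{1+\delta_2}{1+\delta_1}$, then $f(x)\in S_{1+\delta_2}(x_2)$.
   Context: $S_r(x_2)=\{y\in\mathbb{C}_p:|y-x_2|_p=r\}$. *)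

(* Defs.v *)
From HB Require Import structures.
From mathcomp Require Import all_boot all_order all_algebra.
From mathcomp Require Import reals.
Set Implicit Arguments. Unset Strict Implicit. Unset Printing Implicit Defensive.
Import Order.TTheory GRing.Theory Num.Theory.
Local Open Scope ring_scope.

(* An abstract model of (C_p, |.|_p): an algebraically closed field K with a
   real-valued absolute value that is non-archimedean, complete, and restricts
   to the p-adic absolute value (|p|_p = 1/p).  C_p is such a model. *)
Definition is_Cp_norm (R : realType) (K : closedFieldType) (p : nat)
  (nrm : K -> R) : Prop :=
  [/\ forall x, nrm x = 0 <-> x = 0,
      forall x, 0 <= nrm x,
      forall x y, nrm (x * y) = nrm x * nrm y,
      forall x y, nrm (x + y) <= Num.max (nrm x) (nrm y) &
      nrm (p%:R) = (p%:R)^-1] /\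
      (
      forall u : nat -> K,
        (forall e : R, 0 < e -> exists N, forall m n, (N <= m)%N -> (N <= n)%N ->
           nrm (u m - u n) < e) ->
        exists l, forall e : R, 0 < e -> exists N, forall n, (N <= n)%N ->
           nrm (u n - l) < e).

Definition sphere (R : realType) (K : closedFieldType) (nrm : K -> R)
  (r : R) (x0 : K) (y : K) : Prop := nrm (y - x0) = r.

Definition mobius (K : closedFieldType) (a b c x : K) : K := (x + a) / (b * x + c).

(* Main.v *)
Require Import Defs.
From HB Require Import structures.
From mathcomp Require Import all_boot all_order all_algebra.
From mathcomp Require Import reals.
From mathcomp Require Import ring lra zify.
Import Order.TTheory GRing.Theory Num.Theory.
Local Open Scope ring_scope.

Theorem lemma3p8 (R : realType) (K : closedFieldType) (p : nat)
  (nrm : K -> R) (a b c s x : K) :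
  prime p -> is_Cp_norm p nrm ->
  b != 0 -> c != a * b ->
  s ^+ 2 = (c - 1) ^+ 2 + 4 * a * b ->
  let x1 := (1 - c + s) / (2 * b) in
  let x2 := (1 - c - s) / (2 * b) in
  let delta1 := nrm ((b * x1 + c) ^+ 2 / (c - a * b)) - 1 in
  let delta2 := nrm ((b * x1 + c) / b) - 1 in
  nrm (x - x2) > (1 + delta2) / (1 + delta1) ->
  x != - c / b /\ sphere nrm (1 + delta2) x2 (mobius a b c x).
Proof.
move=> pp [[N0 Nge0 NM NU Np] _] b0 cab hs x1 x2 d1 d2 hx.
have N00 : nrm 0 = 0 by apply/N0.
have Nn0 y : y != 0 -> nrm y != 0 by move=> /eqP yn; apply/eqP => /N0.
have N1 : nrm 1 = 1.
  have h := NM 1 1; rewrite mulr1 in h.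
  have h1 : nrm 1 != 0 by apply: Nn0; exact: oner_neq0.
  by apply: (mulfI h1); rewrite -h mulr1.
have NV y : y != 0 -> nrm y^-1 = (nrm y)^-1.
  move=> y0; apply: (mulfI (Nn0 y y0)).
  by rewrite -NM mulfV // N1 mulfV // Nn0.
have NN y : nrm (- y) = nrm y.
  have hm : nrm (-1) = 1.
    have h := NM (-1) (-1); rewrite mulrNN mulr1 N1 in h.
    have g := Nge0 (-1).
    have : (nrm (-1) - 1) * (nrm (-1) + 1) = 0 by rewrite -subr_sqr expr2 -h expr1n subrr.
    move/eqP; rewrite mulf_eq0 => /orP [/eqP|/eqP]; lra.
  by rewrite -mulN1r NM hm mul1r.
have strict y z : nrm z < nrm y -> nrm (y + z) = nrm y.
  move=> hzy; apply/eqP; rewrite eq_le; apply/andP; split.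
    by apply: le_trans (NU y z) _; rewrite ge_max lexx ltW.
  have := NU (y + z) (- z); rewrite addrK NN le_max => /orP [] // h; lra.
have two0 : (2 : K) != 0.
  apply/eqP => h2.
  have p1 : (1 < p)%N by apply: prime_gt1.
  have hp1 : (1 : R) < p%:R by rewrite ltr1n.
  move: Np; rewrite (divn_eq p 2) natrD natrM.
  rewrite h2 mulr0 add0r -(divn_eq p 2).
  have := ltn_pmod p (isT : (0 < 2)%N).
  case: (p %% 2)%N => [|[|//]] _.
  - rewrite N00 => /esym /eqP; rewrite invr_eq0 pnatr_eq0; lia.
  - rewrite N1 => /esym /eqP; rewrite invr_eq1 pnatr_eq1; lia.
have four0 : (4 : K) != 0.
  have -> : (4 : K) = 2 * 2 by ring.
  by rewrite mulf_neq0.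
have ha : a = (s ^+ 2 - (c - 1) ^+ 2) / (4 * b).
  by rewrite hs; field; rewrite ?b0 ?two0 ?four0.
set A := b * x1 + c.
set B := b * x2 + c.
have F1 : 1 - b * x2 = A.
  rewrite /A /x1 /x2; field; rewrite ?b0 ?two0 ?four0 //.
have F2 : A * B = c - a * b.
  rewrite /A /B /x1 /x2 ha; field; rewrite ?b0 ?two0 ?four0 //.
have F3 : a = x2 * (B - 1).
  rewrite /B /x2 {1}ha; field; rewrite ?b0 ?two0 ?four0 //.
have AB0 : A * B != 0 by rewrite F2 subr_eq0.
have A0 : A != 0 by move: AB0; rewrite mulf_eq0 negb_or => /andP [].
have B0 : B != 0 by move: AB0; rewrite mulf_eq0 negb_or => /andP [].
have NA := Nn0 _ A0; have NB := Nn0 _ B0; have Nb := Nn0 _ b0.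
have NAp : 0 < nrm A by rewrite lt_def NA Nge0.
have NBp : 0 < nrm B by rewrite lt_def NB Nge0.
have Nbp : 0 < nrm b by rewrite lt_def Nb Nge0.
have e1 : 1 + d1 = nrm A / nrm B.
  rewrite /d1 addrC subrK -F2 NM (NV _ AB0) NM expr2 NM; field; rewrite ?NA ?NB //.
have e2 : 1 + d2 = nrm A / nrm b by rewrite /d2 addrC subrK NM NV.
set u := x - x2.
have hbu : nrm B < nrm (b * u).
  move: hx; rewrite e1 e2 NM -/u.
  have -> : nrm A / nrm b / (nrm A / nrm B) = nrm B / nrm b.
    by field; rewrite NA NB Nb.
  by rewrite ltr_pdivrMr // mulrC.
have D : b * x + c = b * u + B by rewrite /u /B; ring.
have ND : nrm (b * x + c) = nrm (b * u) by rewrite D strict.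
have D0 : b * x + c != 0.
  apply/eqP => h; move: ND; rewrite h N00 => h'.
  by move: hbu; rewrite -h'; lra.
split.
  apply/eqP => hxe; move: D0; rewrite hxe; apply/negP/negPn/eqP; field.
  exact: b0.
rewrite /sphere /mobius e2.
have -> : (x + a) / (b * x + c) - x2 = A * u / (b * x + c).
  rewrite F3 -F1 /u /B; field; exact: D0.
rewrite NM NV // NM ND NM; field; apply/andP; split => //.
apply/eqP => hu; move: hbu; rewrite NM hu mulr0; lra.
Qed.
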